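(* Let $\mathcal{C}$ be a category, $J$ a directed partially ordered set, and $\boldsymbol{f}\in(pro^J$-$\mathcal{C})(\boldsymbol{X},\boldsymbol{Y})$. Then there exist inverse systems $\boldsymbol{X}'$ and $\boldsymbol{Y}'$ in $\mathcal{C}$ indexed by the same cofinite directed set $(N,\le)$, a morphism $\boldsymbol{f}':\boldsymbol{X}'\to\boldsymbol{Y}'$ of $pro^J$-$\mathcal{C}$ having a level representative $(1_N,f'^j_\nu)$, and isomorphisms $\boldsymbol{i}:\boldsymbol{X}\to\boldsymbol{X}'$, $\boldsymbol{j}:\boldsymbol{Y}\to\boldsymbol{Y}'$ of $pro^J$-$\mathcal{C}$ such that $\boldsymbol{j}\boldsymbol{f}=\boldsymbol{f}'\boldsymbol{i}$.
   Context: An inverse system $\boldsymbol{X}=(X_\lambda,p_{\lambda\lambda'},\Lambda)$ in $\mathcal{C}$: $\Lambda$ directed preordered, morphisms $p_{\lambda\lambda'}:X_{\lambda'}\to X_\lambda$ for $\lambda\le\lambda'$, $p_{\lambda\lambda}=1$, $p_{\lambda\lambda'}p_{\lambda'\lambda''}=p_{\lambda\lambda''}$. A directed set is cofinite if every element has only finitely many predecessors. A $J$-morphism $(f,f^j_\mu):\boldsymbol{X}\to\boldsymbol{Y}=(Y_\mu,q_{\mu\mu'},M)$: a function $f:M\to\Lambda$ and $\mathcal{C}$-morphisms $f^j_\mu:X_{f(\mu)}\to Y_\mu$ ($\mu\in M$, $j\in J$) such that for all $\mu\le\mu'$ there exist $\lambda\ge f(\mu),f(\mu')$ and $j_0$ with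 $f^{j'}_\mu p_{f(\mu)\lambda}=q_{\mu\mu'}f^{j'}_{\mu'}p_{f(\mu')\lambda}$ for all $j'\ge j_0$. Composition $(g,g^j_\nu)(f,f^j_\mu)=(fg,g^j_\nu f^j_{g(\nu)})$, identity $(1_\Lambda,1_{X_\lambda})$. $(f,f^j_\mu)\sim(f',f'^j_\mu)$ iff for every $\mu$ there exist $\lambda\ge f(\mu),f'(\mu)$ and $j_0$ with $f^{j'}_\mu p_{f(\mu)\lambda}=f'^{j'}_\mu p_{f'(\mu)\lambda}$ for all $j'\ge j_0$. $pro^J$-$\mathcal{C}$ is the quotient category. A level $J$-morphism has $M=\Lambda$, $f=1_\Lambda$. *)

(* Defs.v *)
From Stdlib Require Import List.
Set Implicit Arguments.

Record Category := {
  Ob :> Type;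
  Hom : Ob -> Ob -> Type;
  comp : forall a b e : Ob, Hom b e -> Hom a b -> Hom a e;
  idm : forall a : Ob, Hom a a;
  comp_assoc : forall a b c d (h : Hom c d) (g : Hom b c) (f : Hom a b),
      comp h (comp g f) = comp (comp h g) f;
  comp_id_l : forall a b (f : Hom a b), comp (idm b) f = f;
  comp_id_r : forall a b (f : Hom a b), comp f (idm a) = f
}.
Arguments Hom {_} _ _.
Arguments comp {_ _ _ _} _ _.
Arguments idm {_} _.

Record DirSet := {
  dcar :> Type;
  dle : dcar -> dcar -> Prop;
  dle_refl : forall x, dle x x;
  dle_trans : forall x y z, dle x y -> dle y z -> dle x z;
  dinhabited : inhabited dcar;
  ddirected : forall x y, exists z, dle x z /\ dle y z
}.
Arguments dle {d} _ _.

Definition antisymmetric (D : DirSet) : Prop :=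
  forall x y : D, dle x y -> dle y x -> x = y.

Definition cofinite (D : DirSet) : Prop :=
  forall x : D, exists l : list D, forall y : D, dle y x -> In y l.

Record InvSys (C : Category) (L : DirSet) := {
  iobj :> L -> Ob C;
  ibond : forall l l' : L, dle l l' -> Hom (iobj l') (iobj l);
  ibond_id : forall l (h : dle l l), ibond l l h = idm (iobj l);
  ibond_comp : forall l l' l'' (h1 : dle l l') (h2 : dle l' l'') (h3 : dle l l''),
      comp (ibond l l' h1) (ibond l' l'' h2) = ibond l l'' h3
}.
Arguments iobj {C L} _ _.
Arguments ibond {C L} _ {l l'} _.

Section ProJ.
Variables (C : Category) (J : DirSet).

Record JData (L M : DirSet) (X : InvSys C L) (Y : InvSys C M) := {
  jfun : M -> L;
  jmor : J -> forall mu : M, Hom (X (jfun mu)) (Y mu)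
}.
Arguments jfun {L M X Y} _ _.
Arguments jmor {L M X Y} _ _ _.

Definition IsJMor L M (X : InvSys C L) (Y : InvSys C M) (f : JData X Y) : Prop :=
  forall (mu mu' : M) (h : dle mu mu'),
  exists (l : L) (h1 : dle (jfun f mu) l) (h2 : dle (jfun f mu') l) (j0 : J),
    forall j' : J, dle j0 j' ->
      comp (jmor f j' mu) (ibond X h1)
      = comp (ibond Y h) (comp (jmor f j' mu') (ibond X h2)).

Definition jcomp L M K (X : InvSys C L) (Y : InvSys C M) (Z : InvSys C K)
    (g : JData Y Z) (f : JData X Y) : JData X Z :=
  {| jfun := fun nu => jfun f (jfun g nu);
     jmor := fun j nu => comp (jmor g j nu) (jmor f j (jfun g nu)) |}.

Definition jid L (X : InvSys C L) : JData X X :=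
  {| jfun := fun l => l; jmor := fun _ l => idm (X l) |}.

Definition jlevel N (X Y : InvSys C N) (fm : J -> forall nu : N, Hom (X nu) (Y nu))
    : JData X Y :=
  {| jfun := fun nu => nu; jmor := fm |}.

Definition jequiv L M (X : InvSys C L) (Y : InvSys C M) (f f' : JData X Y) : Prop :=
  forall mu : M,
  exists (l : L) (h1 : dle (jfun f mu) l) (h2 : dle (jfun f' mu) l) (j0 : J),
    forall j' : J, dle j0 j' ->
      comp (jmor f j' mu) (ibond X h1) = comp (jmor f' j' mu) (ibond X h2).

Definition IsJIso L M (X : InvSys C L) (Y : InvSys C M) (f : JData X Y) : Prop :=
  IsJMor f /\
  exists g : JData Y X, IsJMor g /\
    jequiv (jcomp g f) (jid X) /\ jequiv (jcomp f g) (jid Y).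

End ProJ.

(* Main.v *)
Require Import Defs.
From Stdlib Require Import List ClassicalEpsilon.
Set Implicit Arguments.

Definition ub2 (D : DirSet) (x y : D) : D :=
  proj1_sig (constructive_indefinite_description _ (@ddirected D x y)).
Arguments ub2 {D} x y.
Lemma ub2_l (D : DirSet) (x y : D) : dle x (ub2 x y).
Proof. unfold ub2. destruct (constructive_indefinite_description _ _) as [z [? ?]]; auto. Qed.
Lemma ub2_r (D : DirSet) (x y : D) : dle y (ub2 x y).
Proof. unfold ub2. destruct (constructive_indefinite_description _ _) as [z [? ?]]; auto. Qed.

Inductive T (L M : Type) := leaf : M -> L -> T L M | join : T L M -> T L M -> T L M.
Arguments leaf {L M} _ _.
Arguments join {L M} _ _.

Inductive sub {L M : Type} : T L M -> T L M -> Prop :=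
| sub_refl x : sub x x
| sub_l x y z : sub x y -> sub x (join y z)
| sub_r x y z : sub x z -> sub x (join y z).

Lemma sub_trans {L M : Type} (x y z : T L M) : sub x y -> sub y z -> sub x z.
Proof. intros H1 H2. induction H2; [assumption| apply sub_l | apply sub_r]; auto. Qed.

Fixpoint subs {L M : Type} (t : T L M) : list (T L M) :=
  match t with leaf m l => leaf m l :: nil | join x y => join x y :: subs x ++ subs y end.

Lemma subs_in {L M : Type} (x y : T L M) : sub y x -> In y (subs x).
Proof.
  intro H; induction H.
  - destruct x; simpl; auto.
  - simpl. right. apply in_or_app. auto.
  - simpl. right. apply in_or_app. auto.
Qed.

Definition TDir (L M : DirSet) : DirSet.
Proof.
  refine {| dcar := T L M; dle := @sub L M; dle_refl := @sub_refl L M;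
            dle_trans := @sub_trans L M |}.
  - destruct (dinhabited M) as [m]; destruct (dinhabited L) as [l].
    exact (inhabits (leaf m l)).
  - intros x y. exists (join x y). split; [apply sub_l | apply sub_r]; apply sub_refl.
Defined.

Fixpoint ta {L M : DirSet} (t : T L M) : M :=
  match t with leaf m _ => m | join x y => ub2 (ta x) (ta y) end.
Fixpoint tb {L M : DirSet} (fj : M -> L) (t : T L M) : L :=
  match t with
  | leaf m l => ub2 (fj m) l
  | join x y => ub2 (ub2 (tb fj x) (tb fj y)) (fj (ub2 (ta x) (ta y)))
  end.

Lemma ta_mono (L M : DirSet) (x y : TDir L M) : dle x y -> dle (ta x) (ta y).
Proof.
  intro H; induction H.
  - apply dle_refl.
  - simpl. eapply dle_trans; [exact IHsub| apply ub2_l].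
  - simpl. eapply dle_trans; [exact IHsub| apply ub2_r].
Qed.

Lemma tb_mono (L M : DirSet) fj (x y : TDir L M) : dle x y -> dle (tb fj x) (tb fj y).
Proof.
  intro H; induction H.
  - apply dle_refl.
  - simpl. eapply dle_trans; [exact IHsub|]. eapply dle_trans; [|apply ub2_l]. apply ub2_l.
  - simpl. eapply dle_trans; [exact IHsub|]. eapply dle_trans; [|apply ub2_l]. apply ub2_r.
Qed.

Lemma tb_f (L M : DirSet) fj (x : TDir L M) : dle (fj (ta x)) (tb fj x).
Proof. destruct x; simpl; [apply ub2_l | apply ub2_r]. Qed.

Lemma bond_irr C (D : DirSet) (Z : InvSys C D) (x y : D) (h h' : dle x y) :
  ibond Z h = ibond Z h'.
Proof.
  rewrite <- (comp_id_r C _ _ (ibond Z h)).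
  rewrite <- (@ibond_id _ _ Z y (dle_refl _ y)).
  apply ibond_comp.
Qed.

Lemma bond_comp C (D : DirSet) (Z : InvSys C D) (x y z : D) (h1 : dle x y) (h2 : dle y z) :
  comp (ibond Z h1) (ibond Z h2) = ibond Z (dle_trans _ _ _ _ h1 h2).
Proof. apply ibond_comp. Qed.

Definition reindex C (D N : DirSet) (Z : InvSys C D) (r : N -> D)
  (rmono : forall x y : N, dle x y -> dle (r x) (r y)) : InvSys C N.
Proof.
  refine {| iobj := fun n => Z (r n); ibond := fun x y h => ibond Z (rmono x y h) |}.
  - intros. apply ibond_id.
  - intros. apply ibond_comp.
Defined.

Arguments reindex {C D N} Z r rmono.
Ltac simpc := repeat (rewrite ?comp_id_l, ?comp_id_r, ?ibond_id).

Lemma reindex_iso C (J D N : DirSet) (Z : InvSys C D) (r : N -> D)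
  (rmono : forall x y : N, dle x y -> dle (r x) (r y)) (s : D -> N)
  (hs : forall d, dle d (r (s d))) :
  IsJIso (@Build_JData C J D N Z (reindex Z r rmono) r (fun _ nu => idm (Z (r nu)))).
Proof.
  destruct (dinhabited J) as [j0].
  split.
  - intros nu nu' h. exists (r nu'), (rmono _ _ h), (dle_refl _ _), j0.
    intros. simpl. simpc. reflexivity.
  - exists (@Build_JData C J N D (reindex Z r rmono) Z s (fun _ d => ibond Z (hs d))).
    split; [|split].
    + intros d d' h. destruct (@ddirected N (s d) (s d')) as [l [h1 h2]].
      exists l, h1, h2, j0. intros. simpl. rewrite !bond_comp. apply bond_irr.
    + intro d. exists (r (s d)), (dle_refl _ _), (hs d), j0. intros. simpl. simpc.
      reflexivity.
    + intro nu. destruct (@ddirected N (s (r nu)) nu) as [l [h1 h2]].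
      exists l, h1, h2, j0. intros. simpl. simpc. rewrite bond_comp. apply bond_irr.
Qed.

Theorem theorem2 (C : Category) (J : DirSet) (HJ : antisymmetric J)
    (L M : DirSet) (X : InvSys C L) (Y : InvSys C M) (f : JData J X Y) :
  IsJMor f ->
  exists (N : DirSet) (X' Y' : InvSys C N)
         (fm : J -> forall nu : N, Hom (X' nu) (Y' nu))
         (i : JData J X X') (j : JData J Y Y'),
    cofinite N /\
    IsJMor (jlevel J X' Y' fm) /\
    IsJIso i /\ IsJIso j /\
    jequiv (jcomp j f) (jcomp (jlevel J X' Y' fm) i).
Proof.
  intro Hf.
  destruct (dinhabited J) as [j0].
  destruct (dinhabited M) as [m0].
  destruct (dinhabited L) as [l0].
  set (N := TDir L M).
  set (X' := @reindex C L N X (tb (jfun f)) (@tb_mono L M (jfun f))).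
  set (Y' := @reindex C M N Y (@ta L M) (@ta_mono L M)).
  exists N, X', Y'.
  exists (fun j (nu : N) => comp (jmor f j (ta nu)) (ibond X (tb_f (jfun f) nu))).
  exists (@Build_JData C J L N X X' (tb (jfun f)) (fun _ nu => idm (X (tb (jfun f) nu)))).
  exists (@Build_JData C J M N Y Y' (@ta L M) (fun _ nu => idm (Y (ta nu)))).
  split; [|split; [|split; [|split]]].
  - intro x. exists (subs x). apply subs_in.
  - intros nu nu' h.
    destruct (Hf (ta nu) (ta nu') (ta_mono h)) as [lam [h1 [h2 [j1 H]]]].
    set (l := (join nu' (leaf m0 lam)) : N).
    assert (hnl : dle nu' l) by (apply sub_l; apply sub_refl).
    assert (hlam : dle lam (tb (jfun f) l)).
    { eapply dle_trans; [|apply (tb_mono (jfun f) (x := leaf m0 lam) (y := l)); apply sub_r; apply sub_refl].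
      apply ub2_r. }
    exists l, (dle_trans _ _ _ _ h hnl), hnl, j1. intros j' hj. simpl.
    rewrite <- !(comp_assoc C), !bond_comp.
    rewrite (@bond_irr C L X _ _ _ (dle_trans _ _ _ _ h1 hlam)).
    rewrite (@bond_irr C L X _ _ _ (dle_trans _ _ _ _ h2 hlam)).
    rewrite <- !bond_comp.
    rewrite !(comp_assoc C). rewrite H by exact hj. rewrite !(comp_assoc C). reflexivity.
  - apply (@reindex_iso C J L N X _ (@tb_mono L M (jfun f)) (fun lam => leaf m0 lam)).
    intro d. simpl. apply ub2_r.
  - apply (@reindex_iso C J M N Y _ (@ta_mono L M) (fun mu => leaf mu l0)).
    intro d. simpl. apply dle_refl.
  - intro nu. exists (tb (jfun f) nu), (tb_f (jfun f) nu), (dle_refl _ _), j0.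
    intros. simpl. simpc. reflexivity.
Qed.
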